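(* Let $M$ be the star matrix of a partition of the hypercube ${\bf Z}_q^n$ into subcubes all of the same dimension. Then in every column of $M$ each value $a\in{\bf Z}_q$ occurs the same number of times (entries $*$ are not counted).
   Context: A subcube of ${\bf Z}_q^n$ is obtained by fixing the values of some coordinates and letting the remaining coordinates run through all of ${\bf Z}_q$; its dimension is the number of free coordinates. Its star pattern is the vector of length $n$ over ${\bf Z}_q\cup\{*\}$ with the fixed value in each fixed coordinate and $*$ in each free coordinate. The star matrix of a partition of ${\bf Z}_q^n$ into subcubes (each vector lying in exactly one subcube) is the matrix whose rows are the star patterns of the subcubes of the partition. *)

(* Defs.v *)
From mathcomp Require Import all_boot all_order.
Set Implicit Arguments. Unset Strict Implicit. Unset Printing Implicit Defensive.

(* Z_q is represented by 'I_q; vectors of Z_q^n are {ffun 'I_n -> 'I_q}. *)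
Definition vec (q n : nat) := {ffun 'I_n -> 'I_q}.

(* A star pattern: None stands for *, Some a for a fixed coordinate a. *)
Definition star_pattern (q n : nat) := {ffun 'I_n -> option 'I_q}.

Definition in_subcube (q n : nat) (p : star_pattern q n) (x : vec q n) : bool :=
  [forall i, (p i == None) || (p i == Some (x i))].

Definition cube_dim (q n : nat) (p : star_pattern q n) : nat :=
  #|[pred i | p i == None]|.

(* The star matrix M (rows = star patterns, listed with multiplicity) is the
   star matrix of a partition of Z_q^n into subcubes: every vector lies in
   exactly one subcube (row). *)
Definition is_partition_star_matrix (q n : nat) (M : seq (star_pattern q n)) : Prop :=
  forall x : vec q n, count (fun p => in_subcube p x) M = 1.

Definition col_count (q n : nat) (M : seq (star_pattern q n)) (j : 'I_n) (a : 'I_q) : nat :=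
  count (fun p : star_pattern q n => p j == Some a) M.

(* Main.v *)
Require Import Defs.
From mathcomp Require Import all_boot all_order.

Lemma foldr_prod (T : finType) (f : T -> nat) :
  foldr muln 1 [seq f x | x : T] = \prod_x f x.
Proof. by rewrite unlock /image_mem foldr_map enumT. Qed.

Lemma key q n (p : star_pattern q n) (j : 'I_n) (a : 'I_q) :
  q * #|[pred x : vec q n | in_subcube p x && (x j == a)]| =
  if p j == None then q ^ cube_dim p
  else if p j == Some a then q ^ (cube_dim p).+1 else 0.
Proof.
pose F i := [pred c : 'I_q | ((p i == None) || (p i == Some c)) && ((i != j) || (c == a))].
have E : #|[pred x : vec q n | in_subcube p x && (x j == a)]| = #|family F|.
  apply: eq_card => x; rewrite !inE /in_subcube.
  apply/idP/idP.
    case/andP => /forallP H /eqP xa; apply/forallP => i; rewrite inE H /=.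
    case: (i =P j) => [->|] //=. by apply/eqP.
  move=> /forallP H; apply/andP; split.
    by apply/forallP => i; have := H i; rewrite inE => /andP [].
  by have := H j; rewrite inE eqxx /= => /andP [].
pose g i := if p i == None then q else 1.
have Fi : forall i, i != j -> #|F i| = g i.
  move=> i ij; rewrite /g; case Ep: (p i) => [c|] /=.
    rewrite -(card1 c); apply: eq_card => c'; rewrite !inE ij Ep /= andbT.
    by apply/eqP/eqP => [[->]|->].
  by rewrite -[RHS](card_ord q); apply: eq_card => c'; rewrite !inE ij Ep.
have Fj : #|F j| = if p j == None then 1 else if p j == Some a then 1 else 0.
  case Ep: (p j) => [c|] /=.
    case: (c =P a) => [ca|ca].
      rewrite ca eqxx -(card1 a); apply: eq_card => c'; rewrite !inE eqxx Ep /=.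
      case: (c' =P a) => [->|]; rewrite ?andbF ?andbT ?eqxx ?ca //. exact/eqP.
    case: eqP => [[/ca] //|_].
    apply/eqP; rewrite -leqn0 leqNgt; apply/card_gt0P => -[c'].
    rewrite !inE eqxx Ep /= => /andP [/eqP [<-]] /eqP //.
  by rewrite -(card1 a); apply: eq_card => c'; rewrite !inE eqxx Ep.
have D : q ^ cube_dim p = g j * \prod_(i | i != j) g i.
  rewrite /cube_dim -prod_nat_const big_mkcond /= (bigD1 j) //=.
have P : #|family F| = #|F j| * \prod_(i | i != j) g i.
  rewrite card_family foldr_prod (bigD1 j) //=; congr (_ * _).
  by apply: eq_bigr => i /Fi.
rewrite E P D Fj /g expnS D /g.
by case: (p j) => [c|] /=; [case: (Some c == Some a) => /=|]; rewrite ?mul0n ?muln0 ?mul1n ?muln1 // mulnA.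
Qed.

Lemma ite_split (b1 b2 : bool) (x y : nat) : ~~ (b1 && b2) ->
  (if b1 then x else if b2 then y else 0) = (if b1 then x else 0) + (if b2 then y else 0).
Proof. by case: b1 b2 => [] [] // _; rewrite ?addn0. Qed.

Lemma sum_if_const (T : Type) (r : seq T) (P : pred T) (y : nat) :
  \sum_(p <- r) (if P p then y else 0) = count P r * y.
Proof. by rewrite -big_mkcond /= -sum1_count big_distrl /=; apply: eq_bigr => *; rewrite mul1n. Qed.

Theorem lemma2 (q n : nat) (M : seq (star_pattern q n)) (d : nat) :
  is_partition_star_matrix M ->
  (forall p, p \in M -> cube_dim p = d) ->
  forall (j : 'I_n) (a b : 'I_q), col_count M j a = col_count M j b.
Proof.
move=> HM Hd j a b.
have T : forall c, #|[pred x : vec q n | x j == c]| =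
    \sum_(p <- M) #|[pred x : vec q n | in_subcube p x && (x j == c)]|.
  move=> c.
  under eq_bigr => p _ do rewrite -sum1_card big_mkcond /=.
  rewrite exchange_big /= -sum1_card big_mkcond /=; apply: eq_bigr => x _.
  rewrite inE /=; under eq_bigr => p _ do rewrite inE /=.
  case: (x j == c) => /=; last by rewrite big1 // => p _; rewrite andbF.
  under eq_bigr => p _ do rewrite andbT.
  by rewrite -big_mkcond sum1_count HM.
have Q : forall c, q * #|[pred x : vec q n | x j == c]| =
    count (fun p : star_pattern q n => p j == None) M * q ^ d
    + col_count M j c * q ^ d.+1.
  move=> c; rewrite T big_distrr /= (eq_big_seq (fun p : star_pattern q n =>
    (if p j == None then q ^ d else 0) + (if p j == Some c then q ^ d.+1 else 0))).
    by rewrite big_split /= !sum_if_const.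
  move=> p pM; rewrite key Hd //; apply: ite_split.
  by case: (p j).
pose p0 : star_pattern q n := [ffun => None].
have Z : forall c, q * #|[pred x : vec q n | x j == c]| = q ^ cube_dim p0.
  move=> c; have := @key _ _ p0 j c; rewrite ffunE /= => <-; congr (_ * _); apply: eq_card => x.
  rewrite !inE /in_subcube (_ : [forall i, _] = true) //; apply/forallP => i; by rewrite ffunE.
have := Z a; rewrite -(Z b) !Q => /addnI /eqP.
have q0 : 0 < q ^ d.+1 by rewrite expn_gt0; case: (q) a => [[]|].
by rewrite eqn_pmul2r // => /eqP.
Qed.
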